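(* Let $F$, $G$ and $\Pi\colon\Sigma_A\times I\to\Sigma_N\times I$ be as in the context. If $S\subset\Sigma_A\times I$ is an attracting strip with respect to $G$, then $\Pi(S)$ is an attracting bi-strip with respect to $F$. If $S\subset\Sigma_A\times I$ is a repelling strip with respect to $G$, then $F^{-1}$ is well defined on $\Pi(S)$ and $\Pi(S)$ is a repelling bi-strip with respect to $F$.
   Context: $I=[0,1]$, $R(x)=1-x$. $F(\xi,p)=(\sigma(\xi),f_{\xi_0}(p))$ on $\Sigma_N\times I$, $\Sigma_N=\{1,\ldots,N\}^{\mathbb Z}$, with $f_i$ $C^1$-diffeomorphisms onto their images. $\mathcal I_P$ / $\mathcal I_R$: indices of orientation preserving / reversing $f_i$. $A=(a_{ij})_{i,j=1}^{2N}$ with $a_{ij}=1$ if ($i\in\mathcal I_P$, $j\le N$), or ($i\in\mathcal I_R$, $j>N$), or ($i-N\in\mathcal I_P$, $j>N$), or ($i-N\in\mathcal I_R$, $j\le N$), else $0$; $\Sigma_A$ the $A$-admissible sequences in $\{1,\ldots,2N\}^{\mathbb Z}$ with shift $\sigma_A$; $\pi(\omega)_n=\overline{\omega_n}$ ($\overline i=i$ for $i\le N$, $\overline i=i-N$ otherwise). $G(\omega,x)=(\sigma_A(\omega),g_{\omega_0}(x))$ with $g_i=f_i$, $g_{i+N}=R\circ f_i\circ R$ ($i\in\mathcal I_P$), $g_i=R\circ f_i$, $g_{i+N}=f_i\circ R$ ($i\in\mathcal I_R$). $C=\{\omega\colon\omega_0\le N\}$; $\Pi(\omega,x)=(\pi(\omega),x)$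 if $\omega\in C$, $(\pi(\omega),R(x))$ otherwise. For a space $\Sigma$ (either $\Sigma_A$ or $\Sigma_N$) and functions $\varphi,\psi\colon\Sigma\to I$ with $\varphi(\omega)<\psi(\omega)$ for all $\omega$, the strip is $S_{\varphi,\psi}=\{(\omega,x)\colon\varphi(\omega)\le x\le\psi(\omega)\}$; a bi-strip is a union of two strips. For a step skew-product $H$ on $\Sigma\times I$, a (bi-)strip $S$ is attracting if $H(S)\subset\operatorname{int}(S)$, and repelling if $H^{-1}$ is defined on $S$ and $H^{-1}(S)\subset\operatorname{int}(S)$. *)

(* Defs.v *)
From HB Require Import structures.
From mathcomp Require Import all_boot all_order all_algebra.
From mathcomp Require Import all_classical all_reals all_analysis.
Set Implicit Arguments. Unset Strict Implicit. Unset Printing Implicit Defensive.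
Import Order.TTheory GRing.Theory Num.Theory.
Import numFieldNormedType.Exports.
Local Open Scope classical_set_scope.
Local Open Scope ring_scope.

(* Symbols {1,..,N} are encoded as 'I_N = {0,..,N-1};
   symbols {1,..,2N} as 'I_(N + N), where the first block (lshift) is
   {1,..,N} and the second block (rshift) is {N+1,..,2N}. *)

Section Defs.
Variable R : realType.

Definition inI (x : R) : Prop := 0 <= x <= 1.
Definition refl (x : R) : R := 1 - x.

Definition C1_diffeo_onto_image (f : R -> R) : Prop :=
  (forall x, inI x -> inI (f x)) /\
  {in `[0, 1] &, injective f} /\
  (forall x, inI x -> derivable f x 1) /\
  {within `[0, 1], continuous (derive1 f)} /\
  (forall x, inI x -> derive1 f x != 0).

Definition orientation_preserving (f : R -> R) : Prop :=
  forall x y, inI x -> inI y -> x < y -> f x < f y.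
Definition orientation_reversing (f : R -> R) : Prop :=
  forall x y, inI x -> inI y -> x < y -> f y < f x.

Definition pt (T : Type) := ((int -> T) * R)%type.

Definition shift (T : Type) (w : int -> T) : int -> T := fun n => w (n + 1).

(* The ambient space {(w,x) | D w, x in I}, D describing the admissible
   sequences (D = setT for Sigma_N, D = A-admissible for Sigma_A). *)
Definition space (T : Type) (D : set (int -> T)) : set (pt T) :=
  [set z | D z.1 /\ inI z.2].

(* Interior relative to the space (product topology: cylinders around
   coordinates -n..n times open intervals). *)
Definition rel_interior (T : Type) (D : set (int -> T)) (S : set (pt T))
  : set (pt T) :=
  [set z | space D z /\
     exists (n : nat) (e : R), 0 < e /\
       forall z', space D z' ->
         (forall k : int, - (n%:Z) <= k <= n%:Z -> z'.1 k = z.1 k) ->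
         `|z'.2 - z.2| < e -> S z'].

Definition strip (T : Type) (D : set (int -> T)) (phi psi : (int -> T) -> R)
  : set (pt T) :=
  [set z | D z.1 /\ phi z.1 <= z.2 /\ z.2 <= psi z.1].

Definition strip_bounds (T : Type) (D : set (int -> T))
  (phi psi : (int -> T) -> R) : Prop :=
  forall w, D w -> inI (phi w) /\ inI (psi w) /\ phi w < psi w.

Definition is_strip (T : Type) (D : set (int -> T)) (S : set (pt T)) : Prop :=
  exists phi psi, strip_bounds D phi psi /\ S = strip D phi psi.

Definition is_bistrip (T : Type) (D : set (int -> T)) (S : set (pt T)) : Prop :=
  exists phi1 psi1 phi2 psi2,
    strip_bounds D phi1 psi1 /\ strip_bounds D phi2 psi2 /\
    S = strip D phi1 psi1 `|` strip D phi2 psi2.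

Definition attracting (T : Type) (D : set (int -> T)) (H : pt T -> pt T)
  (S : set (pt T)) : Prop :=
  H @` S `<=` rel_interior D S.

(* H^{-1} is defined on S (S lies in the image of the space under H, which
   is injective) and H^{-1}(S) = {z in space | H z in S} is in int(S). *)
Definition inverse_defined_on (T : Type) (D : set (int -> T))
  (H : pt T -> pt T) (S : set (pt T)) : Prop :=
  S `<=` H @` space D.

Definition repelling (T : Type) (D : set (int -> T)) (H : pt T -> pt T)
  (S : set (pt T)) : Prop :=
  inverse_defined_on D H S /\
  [set z | space D z /\ S (H z)] `<=` rel_interior D S.

Variable N : nat.

Definition bar (w : 'I_(N + N)) : 'I_N :=
  match fintype.split w with inl i => i | inr i => i end.
Definition upper (w : 'I_(N + N)) : bool :=
  match fintype.split w with inl _ => false | inr _ => true end.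

(* P i = true iff i in I_P (orientation preserving), false iff i in I_R. *)
Variable P : 'I_N -> bool.

Definition amat (i j : 'I_(N + N)) : bool :=
  [|| (~~ upper i && P (bar i) && ~~ upper j),
      (~~ upper i && ~~ P (bar i) && upper j),
      (upper i && P (bar i) && upper j) |
      (upper i && ~~ P (bar i) && ~~ upper j)].

Definition admissible : set (int -> 'I_(N + N)) :=
  [set w | forall n : int, amat (w n) (w (n + 1))].

Definition fullN : set (int -> 'I_N) := setT.

Variable f : 'I_N -> R -> R.

Definition F (z : pt 'I_N) : pt 'I_N := (shift z.1, f (z.1 0) z.2).

Definition gmap (w : 'I_(N + N)) : R -> R :=
  let i := bar w in
  if P i then (if upper w then refl \o f i \o refl else f i)
  else (if upper w then f i \o refl else refl \o f i).

Definition G (z : pt 'I_(N + N)) : pt 'I_(N + N) :=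
  (shift z.1, gmap (z.1 0) z.2).

Definition proj (w : int -> 'I_(N + N)) : int -> 'I_N := fun n => bar (w n).

Definition Pi (z : pt 'I_(N + N)) : pt 'I_N :=
  if upper (z.1 0) then (proj z.1, refl z.2) else (proj z.1, z.2).

End Defs.

(* Main.v *)
Require Import Defs.
From HB Require Import structures.
From mathcomp Require Import all_boot all_order all_algebra.
From mathcomp Require Import all_classical all_reals all_analysis.
From mathcomp Require Import zify ring lra.
Import Order.TTheory GRing.Theory Num.Theory.
Local Open Scope classical_set_scope.
Local Open Scope ring_scope.

Definition mk {N : nat} (i : 'I_N) (b : bool) : 'I_(N + N) :=
  unsplit (if b then inr i else inl i).

Lemma bar_mk N (i : 'I_N) b : bar (mk i b) = i.
Proof. by rewrite /bar /mk unsplitK; case: b. Qed.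
Lemma upper_mk N (i : 'I_N) b : upper (mk i b) = b.
Proof. by rewrite /upper /mk unsplitK; case: b. Qed.
Lemma mk_eta N (w : 'I_(N + N)) : mk (bar w) (upper w) = w.
Proof.
rewrite /mk /bar /upper; case E: (fintype.split w) => [i|i];
by rewrite -E splitK.
Qed.

Lemma propag (u v r s : int -> bool) (n : nat) :
  u 0 = v 0 -> (forall m, u (m + 1) = u m (+) r m) ->
  (forall m, v (m + 1) = v m (+) s m) ->
  (forall m, - (n%:Z) <= m <= n%:Z -> r m = s m) ->
  forall m, - (n%:Z) <= m <= n%:Z -> u m = v m.
Proof.
move=> h0 hu hv hrs.
have pos : forall k : nat, (k <= n)%N -> u k%:Z = v k%:Z.
  elim=> [|k IH] hk; first by [].
  rewrite -addn1 PoszD hu hv IH; last by lia.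
  by rewrite hrs //; lia.
have neg : forall k : nat, (k <= n)%N -> u (- k%:Z) = v (- k%:Z).
  elim=> [|k IH] hk; first by [].
  have E : forall (w t : int -> bool), (forall m, w (m + 1) = w m (+) t m) ->
      w (- (k.+1)%:Z) = w (- k%:Z) (+) t (- (k.+1)%:Z).
    move=> w t hw; have -> : - k%:Z = - (k.+1)%:Z + 1 by lia.
    by rewrite hw addbK.
  rewrite (E u r hu) (E v s hv) IH; last by lia.
  by rewrite hrs //; lia.
move=> m hm; case: m hm => k hk.
  by apply: pos; lia.
rewrite NegzE; apply: neg; rewrite NegzE in hk; lia.
Qed.

Section Lift.
Variables (N : nat) (P : 'I_N -> bool).

Fixpoint fw (xi : int -> 'I_N) (b0 : bool) (k : nat) : bool :=
  if k is k'.+1 then fw xi b0 k' (+) ~~ P (xi k'%:Z) else b0.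
Fixpoint bw (xi : int -> 'I_N) (b0 : bool) (k : nat) : bool :=
  if k is k'.+1 then bw xi b0 k' (+) ~~ P (xi (- (k'.+1)%:Z)) else b0.
Definition ub xi b0 (n : int) : bool :=
  match n with Posz k => fw xi b0 k | Negz k => bw xi b0 k.+1 end.

Lemma ub0 xi b0 : ub xi b0 0 = b0. Proof. by []. Qed.

Lemma ubS xi b0 m : ub xi b0 (m + 1) = ub xi b0 m (+) ~~ P (xi m).
Proof.
case: m => k.
  by rewrite -PoszD addn1.
case: k => [|k].
  have -> : Negz 0 + 1 = 0 by [].
  rewrite /=; have -> : - (1%:Z) = Negz 0 by [].
  by rewrite addbK.
have -> : Negz k.+1 + 1 = Negz k by rewrite !NegzE; lia.
rewrite /=; have -> : - (k.+2)%:Z = Negz k.+1 by rewrite NegzE.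
by rewrite addbK.
Qed.

Definition lift xi b0 : int -> 'I_(N + N) := fun n => mk (xi n) (ub xi b0 n).

Lemma lift_adm xi b0 : admissible P (lift xi b0).
Proof.
move=> n; rewrite /lift /amat !upper_mk !bar_mk ubS.
by case: (ub xi b0 n); case: (P (xi n)).
Qed.

Lemma proj_lift xi b0 : Defs.proj (lift xi b0) = xi.
Proof. by apply/funext => n; rewrite /Defs.proj /lift bar_mk. Qed.

Lemma upper_lift xi b0 n : upper (lift xi b0 n) = ub xi b0 n.
Proof. by rewrite /lift upper_mk. Qed.

Lemma adm_upper w : admissible P w ->
  forall m, upper (w (m + 1)) = upper (w m) (+) ~~ P (bar (w m)).
Proof.
move=> hw m; move: (hw m); rewrite /amat.
by case: (upper (w m)); case: (P (bar (w m))); case: (upper (w (m + 1)));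
  rewrite //= ?orbF.
Qed.

Lemma adm_uniq w : admissible P w -> w = lift (Defs.proj w) (upper (w 0)).
Proof.
move=> hw; apply/funext => m.
rewrite /lift -[LHS]mk_eta; congr mk.
apply: (@propag (fun m => upper (w m)) (ub (Defs.proj w) (upper (w 0)))
   (fun m => ~~ P (bar (w m))) (fun m => ~~ P (Defs.proj w m)) `|m|%N) => //.
- exact: adm_upper.
- by move=> k; rewrite ubS.
- lia.
Qed.

Lemma lift_local xi xi' b0 (n : nat) :
  (forall k, - (n%:Z) <= k <= n%:Z -> xi' k = xi k) ->
  forall k, - (n%:Z) <= k <= n%:Z -> lift xi' b0 k = lift xi b0 k.
Proof.
move=> h k hk; rewrite /lift h //; congr mk.
apply: (@propag _ _ (fun m => ~~ P (xi' m)) (fun m => ~~ P (xi m)) n) => //.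
- by move=> m; rewrite ubS.
- by move=> m; rewrite ubS.
- by move=> m hm; rewrite h.
Qed.

End Lift.
Arguments ub {N} P xi b0 n.
Arguments lift {N} P xi b0 n.
Arguments ub0 {N} P xi b0.
Arguments ubS {N} P xi b0 m.
Arguments lift_adm {N} P xi b0 n.
Arguments proj_lift {N} P xi b0.
Arguments upper_lift {N} P xi b0 n.
Arguments adm_upper {N P w}.
Arguments adm_uniq {N P w}.
Arguments lift_local {N} P xi xi' b0 n.

Lemma refl_refl {R : realType} (x : R) : refl (refl x) = x.
Proof. rewrite /refl; lra. Qed.

Lemma inI_refl {R : realType} (x : R) : inI x -> inI (refl x).
Proof. rewrite /inI /refl => /andP[h1 h2]; apply/andP; split; lra. Qed.

Lemma Pi_pair (R : realType) N (w : int -> 'I_(N + N)) (x : R) :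
  Pi (w, x) = (Defs.proj w, if upper (w 0) then refl x else x).
Proof. by rewrite /Pi /=; case: (upper (w 0)). Qed.

Lemma semiconj (R : realType) N P (f : 'I_N -> R -> R) w x :
  admissible P w -> Pi (G P f (w, x)) = F f (Pi (w, x)).
Proof.
move=> hw; rewrite /G Pi_pair Pi_pair /F /=.
have h1 := adm_upper hw 0; rewrite add0r in h1.
rewrite /shift h1 /gmap.
congr pair.
rewrite /Defs.proj.
by case: (upper (w 0)); case: (P (bar (w 0))); rewrite /= ?refl_refl.
Qed.

Lemma Pi_inj2 (R : realType) N (w : int -> 'I_(N + N)) (x y : R) :
  Pi (w, x) = Pi (w, y) -> x = y.
Proof.
rewrite !Pi_pair => [[]]; case: (upper (w 0)) => // h.
by rewrite -(refl_refl x) h refl_refl.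
Qed.

Lemma Pi_interior (R : realType) N P (S : set (pt R 'I_(N + N))) z :
  rel_interior (admissible P) S z -> rel_interior (@fullN N) (@Pi R N @` S) (Pi z).
Proof.
case: z => w x [[/= hw hx] [n [e [he H]]]].
rewrite Pi_pair; split.
  split => //=; case: (upper (w 0)) => //; exact: inI_refl.
exists n, e; split => //.
case=> xi' x' [_ hx'] /= hag hd.
have E : lift P (Defs.proj w) (upper (w 0)) = w by rewrite -(adm_uniq hw).
move: hd E; move Eb: (upper (w 0)) => b hd E.
have hy : S (lift P xi' b, if b then refl x' else x').
  apply: H.
  - split; first exact: lift_adm.
    by rewrite /=; case: (b) => //; exact: inI_refl.
  - move=> k hk /=.
    apply: (etrans (_ : _ = lift P (Defs.proj w) b k)).
      exact: (lift_local P _ _ _ _ hag k hk).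
    exact: (congr1 (fun g => g k) E).
  - move: hd; rewrite /=; case: (b) => //.
    rewrite /refl => hd.
    have -> : 1 - x' - x = - (x' - (1 - x)) by lra.
    by rewrite normrN.
exists (lift P xi' b, if b then refl x' else x') => //.
rewrite Pi_pair proj_lift upper_lift ub0.
by case: (b) => //; rewrite refl_refl.
Qed.

Arguments semiconj {R N P} f w x.
Arguments Pi_interior {R N P S z}.

Theorem lemma3p9 (R : realType) (N : nat) (P : 'I_N -> bool)
  (f : 'I_N -> R -> R)
  (hf : forall i, C1_diffeo_onto_image (f i))
  (hP : forall i, P i -> orientation_preserving (f i))
  (hR : forall i, ~~ P i -> orientation_reversing (f i))
  (S : set (pt R 'I_(N + N))) :
  is_strip (admissible P) S ->
  (attracting (admissible P) (G P f) S ->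
     is_bistrip (@fullN N) (@Pi R N @` S) /\
     attracting (@fullN N) (F f) (@Pi R N @` S)) /\
  (repelling (admissible P) (G P f) S ->
     inverse_defined_on (@fullN N) (F f) (@Pi R N @` S) /\
     is_bistrip (@fullN N) (@Pi R N @` S) /\
     repelling (@fullN N) (F f) (@Pi R N @` S)).
Proof.
move=> [phi [psi [hb hS]]].
have Sadm : forall z, S z -> admissible P z.1.
  by move=> z; rewrite hS => -[].
have bis : is_bistrip (@fullN N) (@Pi R N @` S).
  exists (fun xi => phi (lift P xi false)), (fun xi => psi (lift P xi false)),
    (fun xi => 1 - psi (lift P xi true)), (fun xi => 1 - phi (lift P xi true)).
  split; [|split].
  - move=> xi _; exact: (hb _ (lift_adm P xi false)).
  - move=> xi _; have [h1 [h2 h3]] := hb _ (lift_adm P xi true).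
    split; [exact: inI_refl h2 | split; [exact: inI_refl h1|]].
    lra.
  - apply/seteqP; split.
    + move=> _ [[w x] hz <-]; move: hz; rewrite hS => -[/= hw [h1 h2]].
      have E := adm_uniq hw.
      rewrite Pi_pair.
      rewrite E in h1 h2; move: h1 h2.
      case: (upper (w 0)) => h1 h2.
      * right; split => //=; rewrite /refl; lra.
      * by left; split => //=.
    + move=> [xi x] [[_ /= [h1 h2]]|[_ /= [h1 h2]]].
      * exists (lift P xi false, x).
          by rewrite hS; split; [exact: lift_adm|].
        by rewrite Pi_pair proj_lift upper_lift ub0.
      * exists (lift P xi true, 1 - x).
          rewrite hS; split; [exact: lift_adm|] => /=; split; lra.
        by rewrite Pi_pair proj_lift upper_lift ub0 /= refl_refl.
split.
  move=> hatt; split => //.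
  move=> _ [_ [[w x] hz <-] <-].
  rewrite -(semiconj f w x (Sadm _ hz)).
  apply: Pi_interior; apply: hatt; by exists (w, x).
move=> [hinv hrep].
have inv : inverse_defined_on (@fullN N) (F f) (@Pi R N @` S).
  move=> _ [[w x] hz <-].
  have [[w' x'] [hw' hx'] E] := hinv _ hz.
  exists (Pi (w', x')).
    split => //; rewrite Pi_pair /=; case: (upper (w' 0)) => //; exact: inI_refl.
  by rewrite -(semiconj f w' x' hw') E.
split => //; split => //; split => //.
move=> [xi x] [[_ hx] [[w y] hz hPi]].
have hw := Sadm _ hz; rewrite /= in hw.
move: hPi; rewrite Pi_pair /F /= => -[hpw hy].
set b := upper (w 0) (+) ~~ P (xi 0).
have Esh : Defs.shift (lift P xi b) = w.
  have ha : admissible P (Defs.shift (lift P xi b)).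
    move=> n; rewrite /Defs.shift; exact: lift_adm.
  rewrite (adm_uniq ha) (adm_uniq hw); congr lift.
    by rewrite hpw; apply/funext => n; rewrite /Defs.proj /Defs.shift /lift bar_mk.
  rewrite /Defs.shift add0r upper_lift.
  by rewrite (ubS P xi b 0) ub0 /b addbK.
have hsp : Defs.space (admissible P)
    ((lift P xi b, if upper (lift P xi b 0) then refl x else x) : pt R _).
  split; first exact: lift_adm.
  by rewrite /=; case: (upper _) => //; exact: inI_refl.
have hPy : Pi (lift P xi b, if upper (lift P xi b 0) then refl x else x) = (xi, x).
  rewrite Pi_pair proj_lift; case: (upper _) => //; by rewrite refl_refl.
rewrite -hPy; apply: Pi_interior; apply: hrep; split => //.
have hG := semiconj f (lift P xi b) (if upper (lift P xi b 0) then refl x else x) (lift_adm P xi b).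
rewrite hPy in hG.
move: hG; rewrite /G /=; rewrite Esh => hG.
suff -> : gmap P f (lift P xi b 0) (if upper (lift P xi b 0) then refl x else x) = y by [].
apply: (@Pi_inj2 R N w); rewrite hG /F /=.
rewrite Pi_pair /=; congr pair; first by [].
by rewrite hy.
Qed.
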